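(* For every $c\geq1$, $$|UD_2((1,2,c))|=3\cdot2^{c+1}-2F_{c+4}-2(c)_2,$$ where $F_k$ is the $k$-th Fibonacci number ($F_0=0$, $F_1=1$, $F_k=F_{k-1}+F_{k-2}$) and $(c)_2\in\{0,1\}$ is the remainder of $c$ modulo $2$. Consequently, for every $c\geq2$, $$\rho_{2,(1,2,c)}=\frac{2^c}{3\cdot2^{c+1}-2F_{c+4}-2(c)_2}.$$
   Context: Let $X$ be a finite alphabet with $n\geq 2$ letters and $X^*$ the set of words over $X$; $|v|$ is the length of a word $v$. A code over $X$ is a finite sequence $C=(v_1,\ldots,v_m)$ of words over $X$ such that every $w\in X^*$ has at most one factorization into code-words: if $w=v_{i_1}\cdots v_{i_l}=v_{j_1}\cdots v_{j_{l'}}$ with $l,l'\geq1$, then $l=l'$ and $i_t=j_t$ for all $t$. (Codes are sequences, not sets.) A code $C=(v_1,\ldots,v_m)$ is a prefix code if for all $i,j$, $v_i$ is a prefix of $v_j$ if and only if $i=j$. For a finite sequence $L=(a_1,\ldots,a_m)$ of positive integers, $UD_n(L)$ is the set of all codes $(v_1,\ldots,v_m)$ over an $n$-letter alphabet with $|v_i|=a_i$ for all $i$, $PR_n(L)\subseteq UD_n(L)$ is the subset of prefix codes, and $\rho_{n,L}=|PR_n(L)|/|UD_n(L)|$. *)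

(* Defs.v *)
From mathcomp Require Import all_boot all_order all_algebra.
From mathcomp Require Import boolp.
Set Implicit Arguments. Unset Strict Implicit. Unset Printing Implicit Defensive.
Import GRing.Theory Num.Theory.

Definition is_code (n : nat) (C : seq (seq 'I_n)) : Prop :=
  forall s1 s2 : seq 'I_(size C),
    0 < size s1 -> 0 < size s2 ->
    flatten [seq nth [::] C (val i) | i <- s1] =
    flatten [seq nth [::] C (val i) | i <- s2] ->
    s1 = s2.

Definition is_prefix_code (n : nat) (C : seq (seq 'I_n)) : Prop :=
  forall i j : 'I_(size C),
    prefix (nth [::] C i) (nth [::] C j) <-> i = j.

Definition cand (n : nat) (L : seq nat) : finType :=
  {dffun forall i : 'I_(size L), (nth 0 L i).-tuple 'I_n}.

Definition code_seq (n : nat) (L : seq nat) (C : cand n L) : seq (seq 'I_n) :=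
  [seq val (C i) | i <- enum 'I_(size L)].

Definition UD_card (n : nat) (L : seq nat) : nat :=
  #|[set C : cand n L | `[< is_code (code_seq C) >] ]|.

Definition PR_card (n : nat) (L : seq nat) : nat :=
  #|[set C : cand n L | `[< is_prefix_code (code_seq C) >] ]|.

Definition rho (n : nat) (L : seq nat) : rat :=
  ((PR_card n L)%:R / (UD_card n L)%:R)%R.

Fixpoint fib (k : nat) : nat :=
  match k with
  | 0 => 0
  | 1 => 1
  | (k'.+1 as k1).+1 => fib k1 + fib k'
  end.

(* Main.v *)
Require Import Defs.
From mathcomp Require Import all_boot all_order all_algebra.
From mathcomp Require Import boolp zify ring.
Set Implicit Arguments. Unset Strict Implicit. Unset Printing Implicit Defensive.

Definition W := seq 'I_2.
Definition flat (C : seq W) (s : seq 'I_(size C)) : W :=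
  flatten [seq nth [::] C (val i) | i <- s].
Arguments flat : clear implicits.

Lemma is_codeE C : is_code (n:=2) C <-> forall s1 s2 : seq 'I_(size C),
  0 < size s1 -> 0 < size s2 -> flat C s1 = flat C s2 -> s1 = s2.
Proof. by []. Qed.

Lemma flat_rev (u v w : W) (s : seq 'I_3) :
  flat [:: rev u; rev v; rev w] (rev s) = rev (flat [:: u; v; w] s).
Proof.
rewrite /flat rev_flatten map_rev -map_comp; congr (flatten (rev _)).
by apply: eq_map => i /=; case: i => [[|[|[|]]] ?].
Qed.

Lemma code_rev (u v w : W) : is_code [:: rev u; rev v; rev w] -> is_code [:: u; v; w].
Proof.
move/is_codeE=> H; apply/is_codeE => s1 s2 h1 h2 e.
have := H (rev s1) (rev s2); rewrite !size_rev => /(_ h1 h2).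
rewrite (flat_rev u v w s1) (flat_rev u v w s2) e.
by move=> /(_ erefl) /(congr1 rev); rewrite !revK.
Qed.

Lemma code_revE (u v w : W) : is_code [:: rev u; rev v; rev w] <-> is_code [:: u; v; w].
Proof. split; first exact: code_rev. by move=> H; apply: code_rev; rewrite !revK. Qed.


Definition o2 : 'I_3 := @Ordinal 3 2 isT.

Lemma split2 (s : seq 'I_3) : all (fun i => val i != 2) s \/
  exists t r, all (fun i => val i != 2) t /\ s = t ++ o2 :: r.
Proof.
elim: s => [|x s IH]; first by left.
case: (boolP (val x == 2)) => hx.
  right; exists [::], s; split => //; congr (_ :: _); apply: val_inj; exact/eqP.
case: IH => [h|[t [r [ht ->]]]]; first by left; rewrite /= hx.
by right; exists (x :: t), r; rewrite /= hx ht.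
Qed.

Lemma flat_cons C (i : 'I_(size C)) s : flat C (i :: s) = nth [::] C i ++ flat C s.
Proof. by []. Qed.

Lemma flat_cat C (s t : seq 'I_(size C)) : flat C (s ++ t) = flat C s ++ flat C t.
Proof. by rewrite /flat map_cat flatten_cat. Qed.

Lemma flat_nil (C : seq W) (s : seq 'I_(size C)) :
  (forall i : 'I_(size C), 0 < size (nth [::] C i)) -> flat C s = [::] -> s = [::].
Proof.
move=> hne; case: s => [//|i s]; rewrite flat_cons => /(congr1 size).
by rewrite size_cat; have := hne i; case: (size _).
Qed.

Section LTR.
Variables (a b y : 'I_2) (w : W) (f : W -> nat) (k : nat).
Let C := [:: [:: a]; [:: b; y]; w].
Hypothesis hab : b != a.
Hypothesis hw : 0 < size w.
Hypothesis hk : k < size w.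
Hypothesis H1 : forall t : seq 'I_3, all (fun i => val i != 2) t ->
  f (flat C t) = size (flat C t).
Hypothesis H2 : forall t : seq 'I_3, all (fun i => val i != 2) t ->
  forall R, f (flat C t ++ w ++ R) = size (flat C t) + k.

Lemma ne_C (i : 'I_(size C)) : 0 < size (nth [::] C i).
Proof. by case: i => [[|[|[|]]] ?]. Qed.

Lemma ltr_L (j : 'I_3) s1 s2 : val j != 2 ->
  w ++ flat C s1 = nth [::] C j ++ flat C s2 -> False.
Proof.
move=> hj e.
have fW : f (w ++ flat C s1) = k.
  by have := H2 (t:=[::]) isT (flat C s1); rewrite /= add0n.
rewrite e -flat_cons in fW.
case: (split2 (j :: s2)) => [hall|[t [r [ht er]]]].
  have := H1 hall; rewrite fW flat_cons -e size_cat => hh.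
  by move: hk; rewrite hh ltnNge leq_addr.
rewrite er flat_cat flat_cons /= H2 // in fW.
have ft : flat C t = [::].
  apply/eqP; rewrite -size_eq0; apply/eqP; by move: fW => /(congr1 (subn^~ k)); rewrite addnK subnn.
have := flat_nil ne_C ft => tn; move: er; rewrite tn /= => -[ej _].
by move: hj; rewrite ej.
Qed.

Lemma code_ltr : is_code C.
Proof.
apply/is_codeE => s1; elim: s1 => [//|i1 s1 IH] s2 _; case: s2 => [//|i2 s2] _.
rewrite !flat_cons => e.
case: (eqVneq i1 i2) => [ei|ni].
  subst i2; move/eqP: e; rewrite eqseq_cat // => /andP[_ /eqP e].
  case: s1 IH e => [|x1 s1] IH e.
    by symmetry in e; rewrite (flat_nil ne_C e).
  case: s2 e => [|x2 s2] e; first by move: (flat_nil ne_C e).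
  by rewrite (IH (x2 :: s2)).
case: (boolP (val i1 == 2)) => h1.
  have ei1 : i1 = o2 by apply: val_inj; exact/eqP.
  case: (boolP (val i2 == 2)) => h2.
    by move: ni; rewrite ei1 (_ : i2 = o2) ?eqxx //; apply: val_inj; exact/eqP.
  by case: (ltr_L h2 (s1:=s1) (s2:=s2)); rewrite -e ei1.
case: (boolP (val i2 == 2)) => h2.
  have ei2 : i2 = o2 by apply: val_inj; exact/eqP.
  by case: (ltr_L h1 (s1:=s2) (s2:=s1)); rewrite e ei2.
move: ni h1 h2 e; case: i1 => [[|[|[|//]]] p1]; case: i2 => [[|[|[|//]]] p2] //=;
  try (by move=> /eqP []; apply/val_inj); move=> _ _ _ [] eab; by move: hab; rewrite eab eqxx.
Qed.
End LTR.


Fixpoint nobb (b : 'I_2) (s : W) : bool :=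
  match s with
  | x :: t => (match t with y :: _ => ~~ ((x == b) && (y == b)) | [::] => true end) && nobb b t
  | [::] => true
  end.

Fixpoint pf (b : 'I_2) (s : W) : nat :=
  match s with
  | x :: t => match t with
              | y :: _ => if (x == b) && (y == b) then 1 else (pf b t).+1
              | [::] => 1 end
  | [::] => 0
  end.



Lemma pf2 b x y t : pf b (x :: y :: t) = if (x == b) && (y == b) then 1 else (pf b (y :: t)).+1.
Proof. by []. Qed.
Lemma nobb2 b x y t : nobb b (x :: y :: t) = ~~ ((x == b) && (y == b)) && nobb b (y :: t).
Proof. by []. Qed.

Lemma two (a b x : 'I_2) : b != a -> x != a -> x = b.
Proof. by move: x a b => [[|[|//]] ?] [[|[|//]] ?] [[|[|//]] ?] //= _ _; apply: val_inj. Qed.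

Section Nobb.
Variables (a b : 'I_2).
Hypothesis hab : b != a.
Let hba : (a == b) = false. Proof. by apply/negbTE; rewrite eq_sym. Qed.

Lemma pf_nobb s : nobb b s -> pf b s = size s.
Proof.
elim: s => [//|x [|y t] IH] //; rewrite pf2 nobb2 => /andP[h1 h2].
by rewrite (negbTE h1) IH.
Qed.

Lemma pf_lt s : ~~ nobb b s -> pf b s < size s.
Proof.
elim: s => [//|x [|y t] IH] //; rewrite pf2 nobb2.
by case: ifP => //= _ /IH.
Qed.

Lemma pf_catr s r : ~~ nobb b s -> pf b (s ++ r) = pf b s.
Proof.
elim: s => [//|x [|y t] IH] //; rewrite !cat_cons pf2 nobb2 pf2.
by case: ifP => // _ /IH ->.
Qed.

Lemma pf_cat u v : nobb b u -> last a u == a -> pf b (u ++ v) = size u + pf b v.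
Proof.
elim: u => [//|x [|y t] IH].
  move=> _ /eqP /= ->; clear IH; by case: v => [//|z v]; rewrite hba.
rewrite nobb2 => /andP[h1 h2] hl; rewrite cat_cons [_ ++ _]/= pf2 (negbTE h1) IH //.
Qed.

Definition Cba (w : W) := [:: [:: a]; [:: b; a]; w].

Lemma G_flat w (t : seq 'I_3) : all (fun i => val i != 2) t ->
  nobb b (flat (Cba w) t) && (last a (flat (Cba w) t) == a).
Proof.
elim: t => [|i t IH] //= /andP[hi /IH] /andP[h1 h2].
rewrite flat_cons; case: i hi => [[|[|[|//]]] p] //= _.
  rewrite hba h1 /=; case: (flat (Cba w) t) h1 h2 => //.
rewrite eqxx hba /= h1 andbT; case: (flat (Cba w) t) h1 h2 => //=.
Qed.

Lemma code_ba w : ~~ nobb b w -> is_code (Cba w).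
Proof.
move=> hw.
have sw : 0 < size w by case: w hw.
apply: (@code_ltr a b a w (pf b) (pf b w)) => //.
- exact: pf_lt.
- by move=> t /(G_flat w) /andP[h _]; rewrite pf_nobb.
- move=> t /(G_flat w) /andP[h1 h2] R.
  by rewrite pf_cat // pf_catr.
Qed.

Lemma dec_ba w0 w : nobb b w -> exists t : seq 'I_3,
  all (fun i => val i != 2) t /\ flat (Cba w0) t = w ++ [:: a].
Proof.
move: {2}(size w) (leqnn (size w)) => n; elim: n w => [|n IH] w.
  case: w => // _ _; exists [:: @Ordinal 3 0 isT]; split => //.
case: w => [_ _|x w hs]; first by exists [:: @Ordinal 3 0 isT].
case: (eqVneq x a) => [->|hx].
  case: w hs IH => [|y w] hs IH.
    by move=> _; exists [:: @Ordinal 3 0 isT; @Ordinal 3 0 isT].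
  rewrite nobb2 => /andP[_ h]; have [t [ht e]] := IH (y :: w) hs h.
  by exists (@Ordinal 3 0 isT :: t); rewrite /= ht flat_cons e.
have xb : x = b := two hab hx.
subst x; case: w hs IH => [|y w] hs IH.
  by move=> _; exists [:: @Ordinal 3 1 isT].
rewrite nobb2 eqxx /= => /andP[hy h].
have ya : y = a.
  by apply: (two (b := a) (a := b)) => //; rewrite eq_sym.
subst y; case: w hs h => [|z w] hs h.
  by exists [:: @Ordinal 3 1 isT; @Ordinal 3 0 isT].
have h' : nobb b (z :: w) by move: h => /andP[].
have hs' : size (z :: w) <= n by move: hs => /=; lia.
have [t [ht e]] := IH (z :: w) hs' h'.
by exists (@Ordinal 3 1 isT :: t); rewrite /= ht flat_cons e.
Qed.

Lemma noncode_ba w : nobb b w -> 0 < size w -> ~ is_code (Cba w).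
Proof.
move=> hn hw /is_codeE H.
have [t [ht e]] := dec_ba w hn.
have st : 0 < size t by case: t e ht => // /(congr1 size); rewrite size_cat /= addn1.
have := H [:: o2; @Ordinal 3 0 isT] t isT st.
rewrite e flat_cons flat_cons /= => /(_ erefl) et.
by move: ht; rewrite -et.
Qed.
End Nobb.

Lemma nobb_infix b s : nobb b s = ~~ infix [:: b; b] s.
Proof.
elim: s => [//|x [|y t] IH]; first by rewrite /= orbF; case: (b == x).
rewrite nobb2 IH infix_consl /= negb_or (_ : prefix [::] t = true); last by case: t {IH}.
by rewrite andbT (eq_sym b x) (eq_sym b y) !negb_or.
Qed.

Lemma nobb_rev b s : nobb b (rev s) = nobb b s.
Proof. by rewrite !nobb_infix -(infix_rev _ (rev s)) revK. Qed.



Section Ev.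
Variables (a b : 'I_2).
Hypothesis hab : b != a.
Let hba : (a == b) = false. Proof. by apply/negbTE; rewrite eq_sym. Qed.
Let hba' : (b == a) = false. Proof. by apply/negbTE. Qed.

Fixpoint ev (s : W) : bool :=
  match s with
  | [::] => true
  | x :: t => if x == a then ev t else
      match t with y :: t' => (y == b) && ev t' | [::] => false end
  end.

Fixpoint gp (s : W) : nat :=
  match s with
  | [::] => 0
  | x :: t => if x == a then (gp t).+1 else
      match t with y :: t' => if y == b then (gp t').+2 else 0 | [::] => 0 end
  end.

Fixpoint st (s : W) : bool :=
  match s with
  | [::] => false
  | x :: t => if x == a then st t else
      match t with y :: t' => if y == b then st t' else true | [::] => false end
  end.

Lemma ev_a s : ev (a :: s) = ev s. Proof. by rewrite /= eqxx. Qed.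
Lemma ev_bb s : ev (b :: b :: s) = ev s. Proof. by rewrite /= hba' eqxx. Qed.
Lemma gp_a s : gp (a :: s) = (gp s).+1. Proof. by rewrite /= eqxx. Qed.
Lemma gp_bb s : gp (b :: b :: s) = (gp s).+2. Proof. by rewrite /= hba' eqxx. Qed.
Lemma st_a s : st (a :: s) = st s. Proof. by rewrite /= eqxx. Qed.
Lemma st_bb s : st (b :: b :: s) = st s. Proof. by rewrite /= hba' eqxx. Qed.
Lemma ev_b1 : ev [:: b] = false. Proof. by rewrite /= hba'. Qed.
Lemma ev_ba s : ev (b :: a :: s) = false. Proof. by rewrite /= hba' hba. Qed.
Lemma st_ba s : st (b :: a :: s) = true. Proof. by rewrite /= hba' hba. Qed.
Lemma st_b1 : st [:: b] = false. Proof. by rewrite /= hba'. Qed.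
Lemma gp_ba s : gp (b :: a :: s) = 0. Proof. by rewrite /= hba' hba. Qed.
Lemma gp_b1 : gp [:: b] = 0. Proof. by rewrite /= hba'. Qed.

Inductive wspec (s : W) : Prop :=
 | WS0 of s = [::] | WSa t of s = a :: t | WSb of s = [:: b]
 | WSba t of s = b :: a :: t | WSbb t of s = b :: b :: t.

Lemma wcase (s : W) : wspec s.
Proof.
case: s => [|x [|y t]]; first exact: WS0.
  case: (eqVneq x a) => [->|hx]; first exact: (@WSa _ [::]).
  by apply: WSb; rewrite (two hab hx).
case: (eqVneq x a) => [->|hx]; first exact: (@WSa _ (y :: t)).
rewrite (two hab hx); case: (eqVneq y a) => [->|hy].
  exact: (@WSba _ t).
by apply: (@WSbb _ t); rewrite (two hab hy).
Qed.

Lemma sind (P : W -> Prop) :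
  (forall s, (forall t, size t < size s -> P t) -> P s) -> forall s, P s.
Proof.
move=> H s; move: {2}(size s) (leqnn (size s)) => n; elim: n s => [|n IH] s hs.
  by apply: H => t; move: hs; case: s => //= _; rewrite ltn0.
apply: H => t ht; apply: IH; move: ht hs; lia.
Qed.

Lemma gp_ev s : ev s -> gp s = size s.
Proof.
elim/sind: s => s IH; case: (wcase s) IH => [->|t ->|->|t ->|t ->] IH //.
- by rewrite ev_a gp_a => /(IH t (ltnSn _)) ->.
- by rewrite ev_b1.
- by rewrite ev_ba.
- by rewrite ev_bb gp_bb => /(IH t (leqnSn _)) ->.
Qed.

Lemma gp_cat u v : ev u -> gp (u ++ v) = size u + gp v.
Proof.
elim/sind: u => u IH; case: (wcase u) IH => [->|t ->|->|t ->|t ->] IH //.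
- by rewrite ev_a cat_cons gp_a => /(IH t (ltnSn _)) -> /=; rewrite ?size_cat; lia.
- by rewrite ev_b1.
- by rewrite ev_ba.
- by rewrite ev_bb !cat_cons gp_bb => /(IH t (leqnSn _)) -> /=; lia.
Qed.

Lemma gp_catr s r : st s -> gp (s ++ r) = gp s.
Proof.
elim/sind: s => s IH; case: (wcase s) IH => [->|t ->|->|t ->|t ->] IH //.
- by rewrite st_a cat_cons !gp_a => /(IH t (ltnSn _)) ->.
- by rewrite st_b1.
- by rewrite !cat_cons !gp_ba.
- by rewrite st_bb !cat_cons !gp_bb => /(IH t (leqnSn _)) ->.
Qed.

Lemma gp_lt s : st s -> gp s < size s.
Proof.
elim/sind: s => s IH; case: (wcase s) IH => [->|t ->|->|t ->|t ->] IH //.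
- by rewrite st_a gp_a => /(IH t (ltnSn _)).
- by rewrite st_b1.
- by rewrite gp_ba.
- by rewrite st_bb gp_bb => /(IH t (leqnSn _)).
Qed.

Lemma ev_cat u v : ev u -> ev v -> ev (u ++ v).
Proof.
elim/sind: u => u IH; case: (wcase u) IH => [->|t ->|->|t ->|t ->] IH //.
- by rewrite ev_a cat_cons ev_a => /(IH t (ltnSn _)).
- by rewrite ev_b1.
- by rewrite ev_ba.
- by rewrite ev_bb !cat_cons ev_bb => /(IH t (leqnSn _)).
Qed.

Lemma ev_rev s : ev s -> ev (rev s).
Proof.
elim/sind: s => s IH; case: (wcase s) IH => [->|t ->|->|t ->|t ->] IH //.
- rewrite ev_a rev_cons -cats1 => /(IH t (ltnSn _)) h; apply: ev_cat => //; by rewrite ev_a.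
- by rewrite ev_ba.
- rewrite ev_bb !rev_cons -!cats1 -catA => /(IH t (leqnSn _)) h; apply: ev_cat => //.
  by rewrite cat1s ev_bb.
Qed.

Lemma R1 s : ~~ ev s -> ~~ st s -> exists P, ev P /\ s = rcons P b.
Proof.
elim/sind: s => s IH; case: (wcase s) IH => [->|t ->|->|t ->|t ->] IH //.
- rewrite ev_a st_a => h1 h2; have [P [hP ->]] := IH t (ltnSn _) h1 h2.
  by exists (a :: P); rewrite ev_a.
- by exists [::].
- by rewrite st_ba.
- rewrite ev_bb st_bb => h1 h2; have [P [hP ->]] := IH t (leqnSn _) h1 h2.
  by exists (b :: b :: P); rewrite ev_bb.
Qed.

Lemma R2 q : ev q -> q != nseq (size q) b -> st (b :: q).
Proof.
elim/sind: q => q IH; case: (wcase q) IH => [->|t ->|->|t ->|t ->] IH //.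
- by rewrite st_ba.
- by rewrite ev_b1.
- by rewrite ev_ba.
- rewrite ev_bb st_bb => h1 h2; rewrite (IH t (leqnSn _)) //.
  by apply: contra h2 => /eqP {1}->.
Qed.

Lemma ev_nseq n : ev (nseq n b) = ~~ odd n.
Proof.
elim/ltn_ind: n => [[|[|n]]] IH //=; first by rewrite hba'.
by rewrite -/(nseq n.+2 b) /= hba' eqxx -/(ev (nseq n b)) IH // negbK.
Qed.

Definition Cbb (w : W) := [:: [:: a]; [:: b; b]; w].

Lemma ev_flat w0 (t : seq 'I_3) : all (fun i => val i != 2) t -> ev (flat (Cbb w0) t).
Proof.
elim: t => [|i t IH] //= /andP[hi /IH h].
rewrite flat_cons; case: i hi => [[|[|[|//]]] p] // _; by rewrite /= ?eqxx ?hba' ?eqxx ?h.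
Qed.

Lemma dec_ev w0 w : ev w -> exists t : seq 'I_3,
  all (fun i => val i != 2) t /\ flat (Cbb w0) t = w.
Proof.
elim/sind: w => w IH; case: (wcase w) IH => [->|t ->|->|t ->|t ->] IH //.
- by exists [::].
- rewrite ev_a => /(IH t (ltnSn _)) [u [hu e]].
  by exists (@Ordinal 3 0 isT :: u); rewrite /= hu flat_cons e.
- by rewrite ev_b1.
- by rewrite ev_ba.
- rewrite ev_bb => /(IH t (leqnSn _)) [u [hu e]].
  by exists (@Ordinal 3 1 isT :: u); rewrite /= hu flat_cons e.
Qed.

Lemma code_bb_ltr w : st w -> is_code (Cbb w).
Proof.
move=> hw.
have sw : 0 < size w by case: w hw.
apply: (@code_ltr a b b w gp (gp w)) => //.
- exact: gp_lt.
- by move=> t /(ev_flat w) h; rewrite gp_ev.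
- by move=> t /(ev_flat w) h R; rewrite gp_cat // gp_catr.
Qed.

Lemma code_bb w : ~~ ev w -> w != nseq (size w) b -> is_code (Cbb w).
Proof.
move=> h1 h2; case: (boolP (st w)) => h3; first exact: code_bb_ltr.
have [P [hP eP]] := R1 h1 h3.
apply/code_revE; rewrite /=.
change (is_code (Cbb (rev w))); apply: code_bb_ltr.
rewrite eP rev_rcons R2 //; first exact: ev_rev.
apply: contra h2; rewrite eP size_rcons size_rev => /eqP e.
apply/eqP; rewrite -(revK P) e rev_nseq; by elim: (size P) => //= n ->.
Qed.
End Ev.


Lemma flat_nseq (a b : 'I_2) w n :
  flat (Cbb a b w) (nseq n (@Ordinal 3 1 isT)) = nseq (n + n) b.
Proof. by elim: n => //= n IH; rewrite flat_cons IH addnS. Qed.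

Lemma noncode_bb a b w : b != a -> 0 < size w ->
  ev a b w || (w == nseq (size w) b) -> ~ is_code (Cbb a b w).
Proof.
move=> hab hw /orP[h|/eqP e] /is_codeE H.
  have [t [ht et]] := dec_ev hab w h.
  have st : 0 < size t by case: t et ht => //= e; move: hw; rewrite -e.
  have := H [:: o2] t isT st; rewrite et flat_cons /= cats0 => /(_ erefl) e.
  by move: ht; rewrite -e.
have := H [:: o2; o2] (nseq (size w) (@Ordinal 3 1 isT)) isT.
rewrite size_nseq flat_nseq !flat_cons /= cats0 => /(_ hw).
rewrite {1 2}e -nseqD => /(_ erefl).
by case: (size w) hw => //= n _ [] /(congr1 val).
Qed.

Lemma cd_aa (a : 'I_2) w : `[< is_code [:: [:: a]; [:: a; a]; w] >] = false.
Proof.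
apply/negbTE/asboolP => /is_codeE H.
by have := H [:: @Ordinal 3 1 isT] [:: @Ordinal 3 0 isT; @Ordinal 3 0 isT] isT isT erefl.
Qed.

Lemma cd_ba (a b : 'I_2) w : b != a -> 0 < size w ->
  `[< is_code [:: [:: a]; [:: b; a]; w] >] = ~~ nobb b w.
Proof.
move=> hab hw; apply/idP/idP => [/asboolP h|h]; last exact/asboolP/code_ba.
by apply/negP => hn; apply: (noncode_ba hab hn hw).
Qed.

Lemma cd_ab (a b : 'I_2) w : b != a -> 0 < size w ->
  `[< is_code [:: [:: a]; [:: a; b]; w] >] = ~~ nobb b w.
Proof.
move=> hab hw; rewrite -(nobb_rev b w) -(@cd_ba a b (rev w) hab); last by rewrite size_rev.
by apply/idP/idP => /asboolP h; apply/asboolP; apply/code_revE; rewrite ?revK.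
Qed.

Lemma cd_bb (a b : 'I_2) w : b != a -> 0 < size w ->
  `[< is_code [:: [:: a]; [:: b; b]; w] >] = ~~ (ev a b w || (w == nseq (size w) b)).
Proof.
move=> hab hw; apply/idP/idP => [/asboolP h|].
  by apply/negP => hn; apply: (noncode_bb hab hw hn).
by rewrite negb_or => /andP[h1 h2]; apply/asboolP; apply: code_bb.
Qed.


Definition l0 : 'I_2 := @Ordinal 2 0 isT.
Definition l1 : 'I_2 := @Ordinal 2 1 isT.

Fixpoint words n : seq W :=
  if n is n'.+1 then map (cons l0) (words n') ++ map (cons l1) (words n') else [:: [::]].

Lemma size_words n : size (words n) = 2 ^ n.
Proof. by elim: n => //= n IH; rewrite size_cat !size_map IH expnS mul2n addnn. Qed.

Lemma mem_words n s : (s \in words n) = (size s == n).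
Proof.
elim: n s => [|n IH] s; first by case: s => [|x [|]].
case: s => [|x s]; first by rewrite mem_cat; apply/negP => /orP[] /mapP[].
rewrite mem_cat.
have -> : (x :: s \in map (cons l0) (words n)) = (x == l0) && (s \in words n).
  apply/mapP/andP => [[y hy [-> ->]]|[/eqP -> h]] //; by exists s.
have -> : (x :: s \in map (cons l1) (words n)) = (x == l1) && (s \in words n).
  apply/mapP/andP => [[y hy [-> ->]]|[/eqP -> h]] //; by exists s.
rewrite IH eqSS -andb_orl.
by case: x => [[|[|//]] ?].
Qed.

Lemma uniq_words n : uniq (words n).
Proof.
elim: n => //= n IH; rewrite cat_uniq !map_inj_uniq //; try by move=> ? ? [].
rewrite IH /= andbT; apply/hasPn => s /mapP [t _ ->]; apply/negP => /mapP [u _ [] /eqP //].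
Qed.

Lemma count_split (a b : 'I_2) (P : pred W) n : b != a ->
  count P (words n.+1) = count (fun w => P (a :: w)) (words n) + count (fun w => P (b :: w)) (words n).
Proof.
move=> hab; rewrite /= count_cat !count_map.
move: a b hab => [[|[|//]] pa] [[|[|//]] pb] //= _.
- have ea : Ordinal pa = l0 by apply: val_inj.
  have eb : Ordinal pb = l1 by apply: val_inj.
  by rewrite ea eb.
- have ea : Ordinal pa = l1 by apply: val_inj.
  have eb : Ordinal pb = l0 by apply: val_inj.
  by rewrite ea eb addnC.
Qed.

Section Cnt.
Variables (a b : 'I_2).
Hypothesis hab : b != a.
Let hba : (a == b) = false. Proof. by apply/negbTE; rewrite eq_sym. Qed.
Let hba' : (b == a) = false. Proof. by apply/negbTE. Qed.

Lemma count_nobb n : count (nobb b) (words n) = fib n.+2.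
Proof.
suff : count (nobb b) (words n) = fib n.+2 /\ count (nobb b) (words n.+1) = fib n.+3 by case.
elim: n => [|n [IH1 IH2]]; first by split => //; rewrite (count_split _ 0 hab) /= hba eqxx.
split => //.
have e1 : count (fun w => nobb b [:: b, a & w]) (words n) = count (nobb b) (words n).
  by apply: eq_count => w; rewrite nobb2 /= hba /= andbF /=; case: w => //= ? ?.
have e2 : count (fun w => nobb b [:: b, b & w]) (words n) = 0.
  by apply/eqP; rewrite -leqn0 leqNgt -has_count; apply/hasPn => w _; rewrite nobb2 eqxx.
have e3 : count (fun w => nobb b (a :: w)) (words n.+1) = count (nobb b) (words n.+1).
  by apply: eq_count => w /=; rewrite hba; case: w => //= ? ?.
rewrite (count_split _ _ hab) e3 (count_split (fun w => nobb b (b :: w)) _ hab) e1 e2.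
rewrite addn0 IH2 IH1 /=; lia.
Qed.

Lemma count_ev n : count (ev a b) (words n) = fib n.+1.
Proof.
suff : count (ev a b) (words n) = fib n.+1 /\ count (ev a b) (words n.+1) = fib n.+2 by case.
elim: n => [|n [IH1 IH2]].
  by split => //; rewrite (count_split _ 0 hab) /= eqxx hba'.
split => //.
have e1 : count (fun w => ev a b [:: b, a & w]) (words n) = 0.
  by apply/eqP; rewrite -leqn0 leqNgt -has_count; apply/hasPn => w _; rewrite ev_ba.
have e2 : count (fun w => ev a b [:: b, b & w]) (words n) = count (ev a b) (words n).
  by apply: eq_count => w; rewrite ev_bb.
have e3 : count (fun w => ev a b (a :: w)) (words n.+1) = count (ev a b) (words n.+1).
  by apply: eq_count => w; rewrite ev_a.
rewrite (count_split _ _ hab) e3 (count_split (fun w => ev a b (b :: w)) _ hab) e1 e2.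
rewrite IH2 IH1 /=; lia.
Qed.

Lemma count_evn n : count (fun w => ev a b w || (w == nseq (size w) b)) (words n) = fib n.+1 + odd n.
Proof.
rewrite -count_ev.
have -> : count (fun w => ev a b w || (w == nseq (size w) b)) (words n) =
  count (ev a b) (words n) + count (fun w => ~~ ev a b w && (w == nseq n b)) (words n).
  rewrite -count_predUI; rewrite (eq_in_count (a1 := predI _ _) (a2 := pred0)); last first.
    by move=> w _ /=; rewrite andbA andbN.
  rewrite count_pred0 addn0; apply: eq_in_count => w; rewrite mem_words => /eqP <- /=.
  by case: (ev a b w).
congr (_ + _).
rewrite (eq_count (a2 := fun w => ~~ ev a b (nseq n b) && (w == nseq n b))); last first.
  by move=> w /=; case: eqP => [->|]; rewrite ?andbF ?andbT.
rewrite (ev_nseq hab) negbK; case: (odd n); last by rewrite count_pred0.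
by rewrite (count_uniq_mem _ (uniq_words n)) mem_words size_nseq eqxx.
Qed.
End Cnt.


Section Cands.
Variable c : nat.
Let L := [:: 1; 2; c].

Definition mkC (u v w : W) : cand 2 L :=
  @finfun _ (fun i : 'I_(size L) => (nth 0 L i).-tuple 'I_2)
    (fun i => insubd (nseq_tuple (nth 0 L i) l0) (nth [::] [:: u; v; w] i)).

Definition i0 : 'I_3 := @Ordinal 3 0 isT.
Definition i1 : 'I_3 := @Ordinal 3 1 isT.
Definition i2 : 'I_3 := @Ordinal 3 2 isT.

Lemma code_seqE (C : cand 2 L) : code_seq C = [:: val (C i0); val (C i1); val (C i2)].
Proof.
rewrite /code_seq /= !enum_ordSl enum_ord0 /=.
have H (i j : 'I_3) : i = j -> tval (C i) = tval (C j) by move=> ->.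
by congr [:: _; _; _]; apply: H; apply: val_inj.
Qed.

Lemma mkCE u v w : size u = 1 -> size v = 2 -> size w = c ->
  code_seq (mkC u v w) = [:: u; v; w].
Proof.
move=> hu hv hw; rewrite code_seqE !ffunE !val_insubd /=.
by rewrite hu hv hw !eqxx.
Qed.

Lemma code_seq_inj : injective (@code_seq 2 L).
Proof.
move=> C D e; apply/ffunP => i; apply: val_inj.
have := congr1 (nth [::] ^~ (val i)) e.
rewrite /code_seq !(nth_map i) ?size_enum_ord. all: rewrite -?enumT ?size_enum_ord ?nth_ord_enum ?ltn_ord //.
Qed.
End Cands.

Section Cands2.
Variable c : nat.
Let L := [:: 1; 2; c].

Definition cands : seq (seq W) :=
  [seq [:: x.1.1; x.1.2; x.2] | x <- [seq (uv, w) | uv <- [seq (u, v) | u <- words 1, v <- words 2], w <- words c]].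

Lemma mem_cands ws : (ws \in cands) =
  [exists u : 1.-tuple 'I_2, exists v : 2.-tuple 'I_2, exists w : c.-tuple 'I_2,
     ws == [:: val u; val v; val w]].
Proof.
apply/mapP/existsP => [[[[u v] w]] h ->|].
  case/allpairsP: h => [[uv w'] [h hw [e1 e2]]]; simpl in e1, e2; subst uv w'.
  case/allpairsP: h => [[u' v'] [hu hv [e1 e2]]]; rewrite !mem_words in hu hv.
  simpl in e1, e2, hu, hv; subst u' v'; rewrite mem_words in hw.
  exists (Tuple hu); apply/existsP; exists (Tuple hv); apply/existsP; exists (Tuple hw) => //.
move=> [u /existsP [v /existsP [w /eqP ->]]].
exists ((val u, val v), val w) => //.
apply/allpairsP; exists ((val u, val v), val w); split; rewrite ?mem_words ?size_tuple //.
apply/allpairsP; exists (val u, val v); split; rewrite ?mem_words ?size_tuple //.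
Qed.

Lemma uniq_cands : uniq cands.
Proof.
rewrite map_inj_in_uniq.
  apply: allpairs_uniq; [|exact: uniq_words|by move=> [? ?] [? ?] _ _ /= ->].
  apply: allpairs_uniq; [exact: uniq_words|exact: uniq_words|by move=> [? ?] [? ?] _ _ /= ->].
by move=> [[? ?] ?] [[? ?] ?] _ _ /= [-> -> ->].
Qed.

Lemma card_cand (P : pred (seq W)) :
  #|[set C : cand 2 L | P (code_seq C)]| = count P cands.
Proof.
rewrite cardsE cardE /enum_mem size_filter.
rewrite (eq_count (a2 := preim (@code_seq 2 L) P)) // -count_map.
apply/permP/uniq_perm.
- rewrite map_inj_uniq; last exact: code_seq_inj.
  by have := enum_uniq (cand 2 L); rewrite enumT.
- exact: uniq_cands.
move=> ws; rewrite mem_cands; apply/mapP/idP.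
  move=> [C _ ->]; rewrite code_seqE.
  apply/existsP; exists (C i0); apply/existsP; exists (C i1); apply/existsP; exists (C i2) => //.
move=> /existsP [u /existsP [v /existsP [w /eqP ->]]].
exists (mkC c (val u) (val v) (val w)); first by have := mem_enum (cand 2 L) (mkC c (val u) (val v) (val w)); rewrite enumT.
by rewrite mkCE ?size_tuple.
Qed.
End Cands2.


Import GRing.Theory Num.Theory.

Lemma count_allpairs (S T : eqType) (q : pred (S * T)) s t :
  count q [seq (x, y) | x <- s, y <- t] = sumn [seq count (fun y => q (x, y)) t | x <- s].
Proof. by elim: s => //= x s IH; rewrite count_cat count_map IH. Qed.

Lemma cntconst (T : Type) (b : bool) (s : seq T) : count (fun _ => b) s = b * size s.
Proof. by case: b; [rewrite count_predT mul1n | rewrite count_pred0]. Qed.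

Lemma pr_char (u0 v0 v1 w0 w1 : 'I_2) w' :
  `[< is_prefix_code [:: [:: u0]; [:: v0; v1]; [:: w0, w1 & w']] >] =
  [&& v0 != u0, w0 != u0 & ~~ ((v0 == w0) && (v1 == w1))].
Proof.
apply/idP/idP => [/asboolP H|].
  have h01 := H (@Ordinal 3 0 isT) (@Ordinal 3 1 isT).
  have h02 := H (@Ordinal 3 0 isT) (@Ordinal 3 2 isT).
  have h12 := H (@Ordinal 3 1 isT) (@Ordinal 3 2 isT).
  move: h01 h02 h12 => /= [h01 _] [h02 _] [h12 _].
  apply/and3P; split.
  - by rewrite eq_sym; apply/negP => /eqP e; have := h01; rewrite e eqxx => /(_ isT).
  - by rewrite eq_sym; apply/negP => /eqP e; have := h02; rewrite e eqxx => /(_ isT).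
  - apply/negP => /andP[/eqP e1 /eqP e2]; have := h12; rewrite e1 e2 !eqxx (_ : prefix [::] w' = true); last by case: (w') {H h12}.
    by move=> /(_ isT).
move=> /and3P[h1 h2 h3]; apply/asboolP => i j.
split; last by move=> ->; exact: prefix_refl.
case: i => [[|[|[|//]]] pi]; case: j => [[|[|[|//]]] pj] //= h;
  try (by apply: val_inj); move: h; rewrite /=.
- by rewrite eq_sym (negbTE h1).
- by rewrite eq_sym (negbTE h2).
- by rewrite andbF.
- by rewrite andbA (negbTE h3).
- by rewrite andbF.
- by rewrite andbA (eq_sym w0) (eq_sym w1) (negbTE h3).
Qed.

Lemma cnt_pr (u0 v0 v1 : 'I_2) n :
  count (fun y => `[< is_prefix_code [:: [:: u0]; [:: v0; v1]; y] >]) (words n.+2) =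
  (v0 != u0) * 2 ^ n.
Proof.
have E x0 x1 : count (fun y => `[< is_prefix_code [:: [:: u0]; [:: v0; v1]; [:: x0, x1 & y]] >]) (words n)
  = [&& v0 != u0, x0 != u0 & ~~ ((v0 == x0) && (v1 == x1))] * 2 ^ n.
  by rewrite (eq_count (a2 := fun _ => [&& v0 != u0, x0 != u0 & ~~ ((v0 == x0) && (v1 == x1))]))
    ?cntconst ?size_words // => y; rewrite pr_char.
rewrite (count_split _ (a := l0) (b := l1)) // !(count_split _ (a := l0) (b := l1)) // !E; clear E.
by move: u0 v0 v1 => [[|[|//]] ?] [[|[|//]] ?] [[|[|//]] ?] /=; lia.
Qed.

Section Fin.
Variable c : nat.
Hypothesis hc : 0 < c.

Lemma cnt_aa (a : 'I_2) : count (fun w => `[< is_code [:: [:: a]; [:: a; a]; w] >]) (words c) = 0.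
Proof. by rewrite (eq_count (a2 := pred0)) ?count_pred0 // => w; rewrite cd_aa. Qed.

Lemma cnt_ab (a b : 'I_2) : b != a ->
  count (fun w => `[< is_code [:: [:: a]; [:: a; b]; w] >]) (words c) + fib c.+2 = 2 ^ c.
Proof.
move=> hab; rewrite -(count_nobb hab) -size_words -(count_predC (nobb b)) addnC; congr (_ + _).
by apply: eq_in_count => w; rewrite mem_words => /eqP hw; rewrite cd_ab // hw.
Qed.

Lemma cnt_ba (a b : 'I_2) : b != a ->
  count (fun w => `[< is_code [:: [:: a]; [:: b; a]; w] >]) (words c) + fib c.+2 = 2 ^ c.
Proof.
move=> hab; rewrite -(count_nobb hab) -size_words -(count_predC (nobb b)) addnC; congr (_ + _).
by apply: eq_in_count => w; rewrite mem_words => /eqP hw; rewrite cd_ba // hw.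
Qed.

Lemma cnt_bb (a b : 'I_2) : b != a ->
  count (fun w => `[< is_code [:: [:: a]; [:: b; b]; w] >]) (words c) + (fib c.+1 + odd c) = 2 ^ c.
Proof.
move=> hab; rewrite -(count_evn hab) -size_words.
rewrite -(count_predC (fun w => ev a b w || (w == nseq (size w) b))) addnC; congr (_ + _).
by apply: eq_in_count => w; rewrite mem_words => /eqP hw; rewrite cd_bb // hw.
Qed.

Lemma UD_eq : UD_card 2 [:: 1; 2; c] + 2 * fib (c + 4) + 2 * (c %% 2) = 3 * 2 ^ c.+1.
Proof.
rewrite /UD_card (card_cand c (fun ws => `[< is_code ws >])) /cands count_map count_allpairs /=.
rewrite !cnt_aa.
have h1 := @cnt_ab l0 l1 isT; have h2 := @cnt_ba l0 l1 isT; have h3 := @cnt_bb l0 l1 isT.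
have h4 := @cnt_ab l1 l0 isT; have h5 := @cnt_ba l1 l0 isT; have h6 := @cnt_bb l1 l0 isT.
have b1 : fib c.+2 <= 2 ^ c by rewrite -h1 leq_addl.
have b2 : fib c.+1 + odd c <= 2 ^ c by rewrite -h3 leq_addl.
move/(congr1 (subn^~ (fib c.+2))): h1; rewrite addnK => ->.
move/(congr1 (subn^~ (fib c.+2))): h2; rewrite addnK => ->.
move/(congr1 (subn^~ (fib c.+1 + odd c))): h3; rewrite addnK => ->.
move/(congr1 (subn^~ (fib c.+2))): h4; rewrite addnK => ->.
move/(congr1 (subn^~ (fib c.+2))): h5; rewrite addnK => ->.
move/(congr1 (subn^~ (fib c.+1 + odd c))): h6; rewrite addnK => ->.
have f4 : fib (c + 4) = fib c.+3 + fib c.+2 by rewrite addn4.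
have f3 : fib c.+3 = fib c.+2 + fib c.+1 by [].
rewrite f4 f3 modn2 expnS; move: b1 b2.
move: (2 ^ c) (fib c.+2) (fib c.+1) (nat_of_bool (odd c)) => X F2 F1 o; lia.
Qed.

Lemma PR_eq : 1 < c -> PR_card 2 [:: 1; 2; c] = 2 ^ c.
Proof.
move=> hc2.
rewrite /PR_card (card_cand c (fun ws => `[< is_prefix_code ws >])) /cands count_map count_allpairs /=.
case: c hc hc2 => [|[|n]] // _ _; rewrite !cnt_pr /= !expnS; lia.
Qed.
End Fin.

Theorem mainTheorem13 :
  (forall c : nat, 1 <= c ->
     (Posz (UD_card 2 [:: 1%N; 2%N; c]) =
     ((3 * 2 ^ c.+1)%:Z - 2 * (fib (c + 4))%:Z - 2 * (c %% 2)%:Z)%R)) /\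
  (forall c : nat, 2 <= c ->
     rho 2 [:: 1%N; 2%N; c] =
     ((2 ^ c)%:R / ((3 * 2 ^ c.+1)%:R - 2 * (fib (c + 4))%:R - 2 * (c %% 2)%:R))%R).
Proof.
split=> c hc.
  have := UD_eq hc; lia.
have hc1 : 0 < c by apply: ltnW.
rewrite /rho (PR_eq hc1 hc); congr (_ / _)%R.
have := congr1 (fun n => n%:R : rat) (UD_eq hc1).
move=> <-; rewrite !natrD; ring.
Qed.
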